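(* Let $b$ be a slowly varying function satisfying $\lim_{t\to0^+}b(t)\in(0,\infty)$, and extend $b$ to all of $\mathbb{R}$ by putting $b(s)=\lim_{t\to0^+}b(t)$ for $s\in(-\infty,0]$. Then for every $t_0\in\mathbb{R}$ there is a constant $C>0$ such that for every $t_1\in[-t_0,t_0]$ the function $b_{t_1}(t)=b(t-t_1)$, $t\in(0,\infty)$, satisfies \[C^{-1}\le\frac{b_{t_1}(t)}{b(t)}\le C\quad\text{for every }t\in(0,\infty).\] In particular, $b_{t_1}$ is a slowly varying function for every choice of $t_1\in\mathbb{R}$.
   Context: A measurable function $b:(0,\infty)\to(0,\infty)$ is called slowly varying if for every $\varepsilon>0$ there exist a non-decreasing function $b_\varepsilon$ and a non-increasing function $b_{-\varepsilon}$ on $(0,\infty)$ such that $t^{\varepsilon}b(t)\approx b_\varepsilon(t)$ and $t^{-\varepsilon}b(t)\approx b_{-\varepsilon}(t)$ on $(0,\infty)$, where $f\approx g$ means $C^{-1}g\le f\le Cg$ for some constant $C\ge1$ independent of the argument. Measurability is with respect to Lebesgue measure. *)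

(* Defs.v *)
From HB Require Import structures.
From mathcomp Require Import all_boot all_order all_algebra.
From mathcomp Require Import all_classical all_reals all_analysis.
From mathcomp Require Import measurable_realfun.
Set Implicit Arguments. Unset Strict Implicit. Unset Printing Implicit Defensive.
Import Order.TTheory GRing.Theory Num.Theory.
Import numFieldNormedType.Exports.
Local Open Scope classical_set_scope.
Local Open Scope ring_scope.

Section SV.
Variable R : realType.

(* Lebesgue measurable subsets of R: the completion of the Borel sets
   w.r.t. Lebesgue measure (Borel set union a Lebesgue-null set). *)
Definition lebesgue_measurable (A : set R) : Prop :=
  completed_algebra_gen (@lebesgue_measure R) A.

Definition lebesgue_measurable_fun (D : set R) (f : R -> R) : Prop :=
  forall B : set R, measurable B -> lebesgue_measurable (D `&` f @^-1` B).

Definition approx_pos (f g : R -> R) : Prop :=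
  exists C : R, 1 <= C /\
    forall t : R, 0 < t -> C^-1 * g t <= f t /\ f t <= C * g t.

(* b : (0,oo) -> (0,oo) slowly varying (only values on (0,oo) matter). *)
Definition slowly_varying (b : R -> R) : Prop :=
  lebesgue_measurable_fun `]0, +oo[ b /\
  (forall t : R, 0 < t -> 0 < b t) /\
  forall eps : R, 0 < eps ->
    (exists bp : R -> R,
       (forall s t : R, 0 < s -> s <= t -> bp s <= bp t) /\
       approx_pos (fun t => t `^ eps * b t) bp) /\
    (exists bm : R -> R,
       (forall s t : R, 0 < s -> s <= t -> bm t <= bm s) /\
       approx_pos (fun t => t `^ (- eps) * b t) bm).

End SV.

(* Main.v *)
Set Warnings "-all".
Require Import Defs.
From HB Require Import structures.
From mathcomp Require Import all_boot all_order all_algebra.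
From mathcomp Require Import all_classical all_reals all_analysis.
From mathcomp Require Import measurable_realfun.
From mathcomp Require Import ring lra.
Import Order.TTheory GRing.Theory Num.Theory.
Import numFieldNormedType.Exports.
Local Open Scope classical_set_scope.
Local Open Scope ring_scope.
Section Shift.
Variable R : realType.
Lemma mshift (c : R) : measurable_fun [set: R] (fun x : R => x + c).
Proof. by apply: measurable_funD => //; exact: measurable_cst. Qed.

Lemma leb_shift (c : R) (A : set R) : measurable A ->
  lebesgue_measure ((fun x => x + c) @^-1` A) = lebesgue_measure A.
Proof.
move=> mA.
unshelve epose proof (@lebesgue_measure_unique R (@pushforward _ _ (measurableTypeR R) (measurableTypeR R) R (@lebesgue_measure R) (fun x : measurableTypeR R => ((x : R) + c : measurableTypeR R))) _ A mA) as H.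
- exact: mshift.
- move=> X /ocitvP [->|[[a b]/= ab ->]]; first by rewrite measure0 /pushforward; apply/esym; exact: measure0.
  rewrite /pushforward.
  have -> : (fun x : R => x + c) @^-1` `]a, b] = `]a - c, b - c]%classic.
    apply/seteqP; split => x /=; rewrite !in_itv /= !ltrBlDr !lerBrDr //.
  rewrite !lebesgue_measure_itv /= !lte_fin ltrD2r.
  case: ifP => // _. by rewrite -!EFinB; congr (_%:E); ring.
- by rewrite H.
Qed.

Lemma lm_meas (D : set R) : measurable D -> lebesgue_measurable D.
Proof.
move=> mD; exists D => //; exists set0; first exact: negligible_set0.
by rewrite setU0.
Qed.

Lemma lm_U (X Y : set R) : lebesgue_measurable X -> lebesgue_measurable Y ->
  lebesgue_measurable (X `|` Y).
Proof.
move=> [A mA [N nN <-]] [B mB [M nM <-]].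
exists (A `|` B); first exact: measurableU.
exists (N `|` M); first exact: negligibleU.
by rewrite setUACA.
Qed.

Lemma lm_I (D X : set R) : measurable D -> lebesgue_measurable X ->
  lebesgue_measurable (D `&` X).
Proof.
move=> mD [A mA [N nN <-]].
exists (D `&` A); first exact: measurableI.
exists (D `&` N); first by apply: negligibleS nN; exact: subIsetr.
by rewrite setIUr.
Qed.

Lemma lm_pre (c : R) (X : set R) : lebesgue_measurable X ->
  lebesgue_measurable ((fun x => x + c) @^-1` X).
Proof.
move=> [A mA [N [M [mM M0 NM]] <-]].
exists ((fun x => x + c) @^-1` A).
  by have := mshift c measurableT _ mA; rewrite setTI.
exists ((fun x => x + c) @^-1` N); last by rewrite preimage_setU.
exists ((fun x => x + c) @^-1` M); split.
- by have := mshift c measurableT _ mM; rewrite setTI.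
- by rewrite leb_shift.
- by move=> x /= /NM.
Qed.
End Shift.
Section Main.
Variables (R : realType) (b : R -> R) (L : R).
Hypotheses (sv : slowly_varying b) (L0 : 0 < L)
  (bl : b t @[t --> 0^'+] --> L) (bneg : forall s, s <= 0 -> b s = L).

Lemma bpos s : 0 < b s.
Proof.
case: (ltrP 0 s) => [s0|s0]; last by rewrite bneg.
by case: sv => _ [H _]; exact: H.
Qed.

Lemma up_ex : exists C, 1 <= C /\
  forall s t, 0 < s -> s <= t -> s * b s <= C * (t * b t).
Proof.
case: sv => _ [_ H]; have [[bp [mon [C [C1 HC]]]] _] := H 1 ltr01.
have C0 : 0 < C by apply: lt_le_trans C1.
exists (C * C); split; first by nra.
move=> s t s0 st.
have t0 : 0 < t by apply: lt_le_trans st.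
have [_ hs] := HC s s0; have [ht _] := HC t t0.
rewrite (powRr1 (ltW s0)) in hs; rewrite (powRr1 (ltW t0)) in ht.
have ht' : bp t <= C * (t * b t).
  by have := ler_wpM2l (ltW C0) ht; rewrite mulrA mulfV ?gt_eqF // mul1r.
have := mon s t s0 st => hm.
apply: (le_trans hs); rewrite -mulrA; apply: ler_wpM2l; first exact: ltW.
exact: le_trans hm ht'.
Qed.

Lemma down_ex : exists C, 1 <= C /\
  forall s t, 0 < s -> s <= t -> b t * s <= C * (t * b s).
Proof.
case: sv => _ [_ H]; have [_ [bm [mon [C [C1 HC]]]]] := H 1 ltr01.
have C0 : 0 < C by apply: lt_le_trans C1.
exists (C * C); split; first by nra.
move=> s t s0 st.
have t0 : 0 < t by apply: lt_le_trans st.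
have [hs _] := HC s s0; have [_ ht] := HC t t0.
rewrite (powR_inv1 (ltW s0)) in hs; rewrite (powR_inv1 (ltW t0)) in ht.
have hs' : bm s <= C * (s^-1 * b s).
  by have := ler_wpM2l (ltW C0) hs; rewrite mulrA mulfV ?gt_eqF // mul1r.
have := mon s t s0 st => hm.
have X : t^-1 * b t <= C * C * (s^-1 * b s).
  apply: (le_trans ht); rewrite -mulrA; apply: ler_wpM2l; first exact: ltW.
  exact: le_trans hm hs'.
have e1 : b t * s = (t^-1 * b t) * (s * t).
  by field; rewrite gt_eqF.
have e2 : C * C * (t * b s) = C * C * (s^-1 * b s) * (s * t).
  by field; rewrite gt_eqF.
rewrite e1 e2; apply: ler_wpM2r => //; exact: ltW (mulr_gt0 s0 t0).
Qed.


Lemma K_ex : exists K, 0 < K /\ forall s t, 0 < s -> 0 < t ->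
  s <= 2 * t -> t <= 2 * s -> b s <= K * b t.
Proof.
have [C1 [C11 H1]] := up_ex; have [C2 [C21 H2]] := down_ex.
exists (2 * C1 * C2); split.
  by apply: mulr_gt0; [apply: mulr_gt0|]; lra.
move=> s t s0 t0 h1 h2; have bs := bpos s; have bt := bpos t.
case: (lerP s t) => st.
- have h := H1 s t s0 st.
  have e : C1 * (t * b t) <= s * (2 * C1 * b t).
    rewrite -subr_ge0.
    have -> : s * (2 * C1 * b t) - C1 * (t * b t) = (2 * s - t) * (C1 * b t) by ring.
    by apply: mulr_ge0; [lra | apply: mulr_ge0; lra].
  have := le_trans h e; rewrite ler_pM2l // => h3.
  apply: (le_trans h3); rewrite -subr_ge0.
  have -> : 2 * C1 * C2 * b t - 2 * C1 * b t = (C2 - 1) * (2 * C1 * b t) by ring.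
  by apply: mulr_ge0; [lra | apply: mulr_ge0; [lra|lra]].
- have h := H2 t s t0 (ltW st).
  have e : C2 * (s * b t) <= t * (2 * C2 * b t).
    rewrite -subr_ge0.
    have -> : t * (2 * C2 * b t) - C2 * (s * b t) = (2 * t - s) * (C2 * b t) by ring.
    by apply: mulr_ge0; [lra | apply: mulr_ge0; lra].
  have := le_trans h e; rewrite mulrC ler_pM2l // => h3.
  apply: (le_trans h3); rewrite -subr_ge0.
  have -> : 2 * C1 * C2 * b t - 2 * C2 * b t = (C1 - 1) * (2 * C2 * b t) by ring.
  by apply: mulr_ge0; [lra | apply: mulr_ge0; [lra|lra]].
Qed.

Lemma near0 : exists2 d, 0 < d &
  forall s, 0 < s -> s <= d -> L / 2 <= b s /\ b s <= 3 * L / 2.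
Proof.
have h2 : 0 < L/2 by rewrite divr_gt0.
have := (cvgrPdist_lt _ _).1 bl (L/2) h2.
move=> /= [d /= d0 Hd].
exists (d / 2); first by rewrite divr_gt0.
move=> s s0 sd.
have : `|L - b s| < L / 2.
  apply: Hd => //; rewrite /ball_ /= sub0r normrN gtr0_norm //; lra.
rewrite ltr_norml => /andP [h3 h4]; split; lra.
Qed.

Lemma bnd_ex T : 0 < T -> exists m M, 0 < m /\
  forall s, s <= T -> m <= b s /\ b s <= M.
Proof.
move=> T0.
have [d d0 Hd] := near0.
pose e := Order.min d T.
have e0 : 0 < e by rewrite lt_min d0 T0.
have ed : e <= d by rewrite ge_min lexx.
have eT : e <= T by rewrite ge_min lexx orbT.
have [C1 [C11 H1]] := up_ex; have [C2 [C21 H2]] := down_ex.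
have [he1 he2] := Hd e e0 ed.
exists (Order.min (L/2) (e * (L/2) / (C1 * T))),
       (Order.max (3 * L / 2) (C2 * (T * (3 * L / 2)) / e)).
split.
  rewrite lt_min; apply/andP; split; first by rewrite divr_gt0.
  apply: divr_gt0; first by apply: mulr_gt0 => //; rewrite divr_gt0.
  by apply: mulr_gt0 => //; lra.
move=> s sT; have bs := bpos s.
case: (lerP s 0) => s0.
  rewrite bneg //; split; first by rewrite ge_min; apply/orP; left; lra.
  by rewrite le_max; apply/orP; left; lra.
case: (lerP s e) => se.
  have [h1 h2] := Hd s s0 (le_trans se ed); split.
    by rewrite ge_min h1.
  by rewrite le_max h2.
split.
- rewrite ge_min; apply/orP; right.
  rewrite ler_pdivrMr; last by apply: mulr_gt0 => //; lra.
  have h := H1 e s e0 (ltW se).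
  apply: le_trans (le_trans h _).
    by rewrite ler_pM2l.
  rewrite [b s * _]mulrC -mulrA ler_pM2l; last lra.
  by rewrite ler_pM2r.
- rewrite le_max; apply/orP; right.
  rewrite ler_pdivlMr //.
  have h := H2 e s e0 (ltW se).
  apply: (le_trans h); rewrite ler_pM2l; last lra.
  apply: (@le_trans _ _ (T * b e)).
    by rewrite ler_pM2r // bpos.
  by rewrite ler_pM2l.
Qed.


Lemma ratio_le (x y C : R) : 0 < x -> 0 < y -> 0 < C ->
  x <= C * y -> y <= C * x -> C^-1 <= x / y /\ x / y <= C.
Proof.
move=> x0 y0 C0 h1 h2; split.
  rewrite ler_pdivlMr //.
  have Ci : 0 <= C^-1 by rewrite invr_ge0 ltW.
  have := ler_wpM2l Ci h2.
  by rewrite mulrA mulVf ?gt_eqF // mul1r.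
by rewrite ler_pdivrMr.
Qed.

Lemma le_mulw (x y c C : R) : 0 <= y -> c <= C -> x <= c * y -> x <= C * y.
Proof. by move=> y0 cC h; apply: (le_trans h); rewrite ler_wpM2r. Qed.

Lemma part1 t0 : exists C : R, 0 < C /\
     forall t1 : R, - t0 <= t1 <= t0 ->
       forall t : R, 0 < t ->
         C^-1 <= b (t - t1) / b t /\ b (t - t1) / b t <= C.
Proof.
pose a := `|t0| + 1.
have ha : a = `|t0| + 1 by [].
clearbody a.
have hn1 : t0 <= `|t0| by apply: ler_norm.
have hn2 : - t0 <= `|t0| by rewrite -normrN ler_norm.
have a0 : 0 < a by rewrite ha; lra.
have [K [K0 HK]] := K_ex.
have [m [M [m0 HB]]] := bnd_ex (3 * a) ltac:(lra).
have mM : m <= M by have [h1 h2] := HB 0 ltac:(lra); apply: le_trans h2.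
have M0 : 0 < M by apply: lt_le_trans mM.
have Mm0 : 0 < M / m by rewrite divr_gt0.
have mMm : M <= M / m * m by rewrite mulfVK ?gt_eqF.
exists (Order.max K (M / m)); split; first by rewrite lt_max K0.
move=> t1 /andP [ht1 ht2] t t0'.
have bx := bpos (t - t1); have by_ := bpos t.
apply: ratio_le => //; first by rewrite lt_max K0.
- case: (lerP t (2 * a)) => ta.
  + have [_ hx] := HB (t - t1) ltac:(lra).
    have [hy _] := HB t ltac:(lra).
    apply: (@le_mulw _ _ (M / m)); first exact: ltW.
      by rewrite le_max lexx orbT.
    apply: (le_trans hx); apply: (le_trans mMm); rewrite ler_pM2l //.
  + apply: (@le_mulw _ _ K); first exact: ltW.
      by rewrite le_max lexx.
    apply: HK; lra.
- case: (lerP t (2 * a)) => ta.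
  + have [_ hx] := HB t ltac:(lra).
    have [hy _] := HB (t - t1) ltac:(lra).
    apply: (@le_mulw _ _ (M / m)); first exact: ltW.
      by rewrite le_max lexx orbT.
    apply: (le_trans hx); apply: (le_trans mMm); rewrite ler_pM2l //.
  + apply: (@le_mulw _ _ K); first exact: ltW.
      by rewrite le_max lexx.
    apply: HK; lra.
Qed.


Lemma shift_bounds t1 : exists Cm : R, 1 <= Cm /\ forall t, 0 < t ->
  b (t - t1) <= Cm * b t /\ b t <= Cm * b (t - t1).
Proof.
have [C [C0 HC]] := part1 `|t1|.
have h1 : - `|t1| <= t1 by rewrite lerNl -normrN ler_norm.
have h2 : t1 <= `|t1| by apply: ler_norm.
exists (Order.max 1 C); split; first by rewrite le_max lexx.
move=> t t0; have [r1 r2] := HC t1 (ltac:(by rewrite h1 h2)) t t0.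
have bx := bpos (t - t1); have by_ := bpos t.
split.
  apply: (@le_mulw _ _ C); first exact: ltW.
    by rewrite le_max lexx orbT.
  by rewrite -ler_pdivrMr.
apply: (@le_mulw _ _ C); first exact: ltW.
  by rewrite le_max lexx orbT.
rewrite ler_pdivlMr // in r1.
have := ler_wpM2l (ltW C0) r1.
by rewrite mulrA mulfV ?gt_eqF // mul1r.
Qed.

End Main.

Lemma approx_comp (R : realType) (f g h : R -> R) (Cm : R) : 1 <= Cm ->
  (forall t, 0 < t -> h t <= Cm * f t /\ f t <= Cm * h t) ->
  approx_pos f g -> approx_pos h g.
Proof.
move=> Cm1 Hm [C [C1 HC]].
have C0 : 0 < C by apply: lt_le_trans C1.
have Cm0 : 0 < Cm by apply: lt_le_trans Cm1.
exists (Cm * C); split; first by nra.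
move=> t t0; have [a1 a2] := Hm t t0; have [c1 c2] := HC t t0; split.
  rewrite invfM -mulrA.
  have := ler_wpM2l (ltW (ltac:(by rewrite invr_gt0) : 0 < Cm^-1)) c1 => h1.
  apply: (le_trans h1); rewrite mulrC ler_pdivrMr //; by rewrite mulrC.
apply: (le_trans a1); rewrite -mulrA; apply: ler_wpM2l => //; exact: ltW.
Qed.


Theorem lemma3p2 (R : realType) (b : R -> R) (L : R) :
  slowly_varying b ->
  0 < L ->
  b t @[t --> 0^'+] --> L ->
  (forall s : R, s <= 0 -> b s = L) ->
  (forall t0 : R, exists C : R, 0 < C /\
     forall t1 : R, - t0 <= t1 <= t0 ->
       forall t : R, 0 < t ->
         C^-1 <= b (t - t1) / b t /\ b (t - t1) / b t <= C) /\
  (forall t1 : R, slowly_varying (fun t => b (t - t1))).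
Proof.
move=> sv L0 bl bneg; split.
  exact: (@part1 _ _ _ sv L0 bl bneg).
move=> t1.
have [Cm [Cm1 HCm]] := @shift_bounds _ _ _ sv L0 bl bneg t1.
have bp_ : forall s, 0 < b s by move=> s; apply: (@bpos _ _ L).
case: (sv) => hm [_ H].
split; [|split].
- move=> B mB.
  have E : `]0, +oo[ `&` (fun t => b (t - t1)) @^-1` B =
    `]0, +oo[ `&` ((fun x => x + - t1) @^-1`
       ((`]0, +oo[ `&` b @^-1` B) `|` (`]-oo, 0] `&` b @^-1` B))).
    apply/seteqP; split => x /= [h1 h2]; split => //.
      case: (ltrP 0 (x - t1)) => hx; [left|right]; split => //;
        by rewrite in_itv /= ?andbT.
    by case: h2 => [[_ h]|[_ h]].
  rewrite E; apply: lm_I; first exact: measurable_itv.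
  apply: lm_pre; apply: lm_U; first exact: hm.
  apply: lm_meas; case: (pselect (B L)) => BL.
    have -> : `]-oo, 0] `&` b @^-1` B = `]-oo, 0]%classic.
      apply/seteqP; split => x /=; first by case.
      move=> hx; have hx' : x <= 0 by move: hx; rewrite /= in_itv.
      by split => //=; rewrite bneg.
    exact: measurable_itv.
  have -> : `]-oo, 0] `&` b @^-1` B = set0.
    apply/seteqP; split => x //= [hx].
    have hx' : x <= 0 by move: hx; rewrite /= in_itv.
    by rewrite bneg.
  exact: measurable0.
- by move=> t t0.
- move=> eps e0; have [[bp [mon ap]] [bm [mon' am]]] := H eps e0.
  split.
    exists bp; split => //; apply: (approx_comp _ _ _ _ _ Cm1 _ ap).
    move=> t t0; have [k1 k2] := HCm t t0; have u0 := powR_ge0 t eps.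
    by split; rewrite mulrCA; apply: ler_wpM2l.
  exists bm; split => //; apply: (approx_comp _ _ _ _ _ Cm1 _ am).
  move=> t t0; have [k1 k2] := HCm t t0; have u0 := powR_ge0 t (- eps).
  by split; rewrite mulrCA; apply: ler_wpM2l.
Qed.
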